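(* Let $G$ be a finite chordal graph and $v$ a vertex of $G$ that lies in a maximal clique of size at least three. Then $v$ is incident on at least two exposed edges of $G$.
   Context: All graphs are finite, undirected, simple. A graph is chordal if every induced cycle has length three. A facet edge of $G$ is an edge $xy$ such that $\{x,y\}$ is a maximal clique of $G$. An edge of $G$ is exposed if it is contained in a unique maximal clique of $G$ and it is not a facet edge. *)

(* Defs.v *)
From mathcomp Require Import all_boot.
Set Implicit Arguments. Unset Strict Implicit. Unset Printing Implicit Defensive.

Definition simple_graph (T : finType) (e : rel T) : Prop :=
  symmetric e /\ irreflexive e.

Definition clique (T : finType) (e : rel T) (K : {set T}) : Prop :=
  forall x y, x \in K -> y \in K -> x != y -> e x y.

Definition maximal_clique (T : finType) (e : rel T) (K : {set T}) : Prop :=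
  clique e K /\ forall K' : {set T}, clique e K' -> K \subset K' -> K' = K.

Definition induced_cycle (T : finType) (e : rel T) (c : seq T) : Prop :=
  [/\ 3 <= size c, uniq c &
    forall x0 i j, i < size c -> j < size c ->
      e (nth x0 c i) (nth x0 c j) =
      ((j == (i.+1 %% size c)) || (i == (j.+1 %% size c)))].

Definition chordal (T : finType) (e : rel T) : Prop :=
  forall c : seq T, induced_cycle e c -> size c = 3.

Definition edge (T : finType) (e : rel T) (x y : T) : Prop := x != y /\ e x y.

Definition facet_edge (T : finType) (e : rel T) (x y : T) : Prop :=
  edge e x y /\ maximal_clique e [set x; y].

Definition exposed_edge (T : finType) (e : rel T) (x y : T) : Prop :=
  [/\ edge e x y,
      (exists! K : {set T}, maximal_clique e K /\ [set x; y] \subset K)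
    & ~ facet_edge e x y].

(* Main.v *)
Require Import Defs.
From mathcomp Require Import all_boot zify.
From Stdlib Require Import Classical.
Set Implicit Arguments. Unset Strict Implicit. Unset Printing Implicit Defensive.

Section Proof.
Variables (T : finType) (e : rel T).
Hypothesis eS : symmetric e.
Hypothesis eirr : irreflexive e.
Hypothesis chord : chordal e.

Definition walkx (x : T) (w : seq T) : Prop :=
  [/\ 0 < size w,
      (forall i, i.+1 < size w -> e (nth x w i) (nth x w i.+1)),
      e x (nth x w 0) /\ e x (nth x w (size w).-1),
      ~~ e (nth x w 0) (nth x w (size w).-1) /\ nth x w 0 != nth x w (size w).-1 &
      (forall i, 0 < i -> i < (size w).-1 -> (nth x w i != x) && ~~ e x (nth x w i))].

Lemma nth_short (x : T) (w : seq T) k b i : k <= b -> b <= size w ->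
  nth x (take k w ++ drop b w) i = if i < k then nth x w i else nth x w (b + (i - k)).
Proof.
move=> kb bw; rewrite nth_cat size_takel; last lia.
case: ifP => ik; first by rewrite nth_take.
by rewrite nth_drop.
Qed.

Lemma shortcut (x : T) (w : seq T) k b : walkx x w -> k < b -> b < size w ->
  (k = 0 -> nth x w b = nth x w 0) ->
  (0 < k -> e (nth x w k.-1) (nth x w b)) ->
  walkx x (take k w ++ drop b w).
Proof.
move=> [w0 wE [xh xl] [hl hl'] wI] kb bw h0 hk.
set w' := _ ++ _.
have sz : size w' = k + (size w - b) by rewrite size_cat size_takel ?size_drop; lia.
have nE i : nth x w' i = if i < k then nth x w i else nth x w (b + (i - k)).
  by apply: nth_short; lia.
have hd : nth x w' 0 = nth x w 0.
  rewrite nE; case: (posnP k) => [k0|kp] //.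
  by rewrite k0 /= addn0 h0.
have tl : nth x w' (size w').-1 = nth x w (size w).-1.
  rewrite sz nE; case: ltnP => h; first lia.
  by have -> : b + ((k + (size w - b)).-1 - k) = (size w).-1 by lia.
split.
- lia.
- move=> i; rewrite sz => hi; rewrite !nE.
  case: (ltnP i.+1 k) => h1; case: (ltnP i k) => h2; try lia.
  + by apply: wE; lia.
  + have -> : b + (i.+1 - k) = b by lia.
    have -> : i = k.-1 by lia.
    by apply: hk; lia.
  + have -> : b + (i.+1 - k) = (b + (i - k)).+1 by lia.
    by apply: wE; lia.
- by rewrite hd tl.
- by rewrite hd tl.
- move=> i i0; rewrite sz => hi; rewrite nE; case: ltnP => ik; apply: wI; lia.
Qed.

Lemma modS_eq i n : i < n -> i.+1 %% n = if i.+1 == n then 0 else i.+1.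
Proof.
move=> h; case: ifP => [/eqP ->|H]; first by rewrite modnn.
by rewrite modn_small //; lia.
Qed.

Lemma walk_false (x : T) (w : seq T) : walkx x w -> False.
Proof.
move: {2}(size w) (leqnn (size w)) => n; elim: n w => [|n IH] w.
  by rewrite leqn0 => /eqP sz [] ; rewrite sz.
move=> wn hw.
have IH' : forall w', size w' < size w -> walkx x w' -> False.
  by move=> w' sw'; apply: IH; lia.
have hw' := hw.
case: hw' => [w0 wE [xh xl] [hl hl'] wI].
set m := size w. have mE : m = size w by [].
have m2 : 1 < m.
  rewrite ltnNge; apply/negP => m1.
  have h : (size w).-1 = 0 by lia.
  by rewrite h eqxx in hl'.
have adjw : forall a b, a < m -> b < m ->
    e (nth x w a) (nth x w b) = (b == a.+1) || (a == b.+1).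
  move=> a b.
  wlog ab : a b / a <= b.
    move=> H; case: (leqP a b) => [ab|ba] ha hb; first exact: H.
    rewrite eS orbC; apply: H => //; lia.
  move=> ha hb.
  case: (ltngtP a b) => [lab|lba|eab]; last first.
  - by rewrite eab eirr; lia.
  - lia.
  case: (eqVneq b a.+1) => [->|nb].
    by rewrite /= wE //; lia.
  rewrite /=.
  have -> : (a == b.+1) = false by lia.
  apply/negP => hab.
  case: (boolP ((a == 0) && (b == m.-1))) => [/andP [/eqP a0 /eqP bm]|nab].
    by move: hl; rewrite -/m -a0 -bm hab.
  apply: (IH' (take a.+1 w ++ drop b w)).
    rewrite size_cat size_takel ?size_drop; lia.
  apply: shortcut => //; lia.
have adjx : forall a, a < m -> e x (nth x w a) = (a == 0) || (a == m.-1).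
  move=> a ha.
  case: (eqVneq a 0) => [a0|a0]; first by rewrite a0 xh.
  case: (eqVneq a m.-1) => [am|am]; first by rewrite am xl orbT.
  rewrite /=.
  by have /andP [_ /negbTE ->] := wI a (ltac:(lia)) (ltac:(lia)).
have ic : induced_cycle e (x :: w).
  split => /=.
  - lia.
  - apply/andP; split.
      apply/negP => xw.
      have nthi := nth_index x xw.
      have iw : index x w < m by rewrite index_mem.
      have := adjx _ iw; rewrite nthi eirr => /esym/norP [i0 im].
      have := wI (index x w) (ltac:(lia)) (ltac:(lia)).
      by rewrite nthi eqxx.
    apply/(uniqP x) => i j; rewrite !inE => hi hj eqij.
    have {hi}hi : i < size w := hi. have {hj}hj : j < size w := hj.
    apply/eqP; apply/negP => nij.
    wlog ij : i j hi hj eqij nij / i < j.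
      move=> H; case: (ltngtP i j) => h.
      + exact: (H i j).
      + apply: (H j i) => //; by rewrite eq_sym.
      + by rewrite h eqxx in nij.
    apply: (IH' (take i w ++ drop j w)).
      rewrite size_cat size_takel ?size_drop; lia.
    apply: (@shortcut x w i j hw) => //.
      by move=> i0; rewrite -eqij i0.
    move=> i0; rewrite -eqij.
    have -> : i = (i.-1).+1 by lia.
    by rewrite /=; apply: wE; lia.
  - move=> x0 i j hi hj.
    rewrite !(set_nth_default x x0) //.
    case: i hi => [|i] hi; case: j hj => [|j] hj /=.
    + rewrite eirr modn_small //; lia.
    + rewrite adjx; last lia.
      rewrite (modS_eq (i := j.+1)); last lia.
      rewrite modn_small; last lia.
      case: ifP => H; lia.
    + rewrite eS adjx; last lia.
      rewrite (modS_eq (i := i.+1)); last lia.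
      rewrite modn_small; last lia.
      case: ifP => H; lia.
    + rewrite adjw; try lia.
      rewrite (modS_eq (i := i.+1)); last lia.
      rewrite (modS_eq (i := j.+1)); last lia.
      case: ifP => H1; case: ifP => H2; lia.
have := chord ic => /= /eqP; rewrite eqSS => /eqP m2'.
by move: hl; rewrite m2' /= (wE 0) // m2'.
Qed.


Definition simplicial (S : {set T}) (u : T) : Prop :=
  forall a b, a \in S -> b \in S -> e u a -> e u b -> a != b -> e a b.

Lemma path_in (R : {set T}) (d : T) (p : seq T) :
  path (fun a b => (a \in R) && (b \in R) && e a b) d p -> forall w, w \in p -> w \in R.
Proof.
elim: p d => [|a p IHp] d //= /andP [/andP [/andP [_ aR] _] hp] w.
rewrite inE => /orP [/eqP -> //|]; exact: IHp hp w.
Qed.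

Lemma nbr_clique (x y z d1 d2 : T) (R : {set T}) (p : seq T) :
  (forall w, w \in R -> (w != x) && ~~ e x w) ->
  e x y -> e x z -> y != z -> ~~ e y z ->
  e y d1 -> e z d2 -> d1 \in R ->
  path (fun a b => (a \in R) && (b \in R) && e a b) d1 p -> d2 = last d1 p -> False.
Proof.
move=> hR xy xz nyz neyz yd1 zd2 d1R hp d2E.
have pR := path_in hp.
apply: (@walk_false x (y :: rcons (d1 :: p) z)).
have hpe : path e y (rcons (d1 :: p) z).
  rewrite rcons_path /= yd1 /= -d2E eS zd2 andbT.
  by apply: sub_path hp => a b /andP [].
split.
- by [].
- move=> i hi; by move/(pathP x): hpe => /(_ i); apply; rewrite /= in hi.
- split => //.
  by rewrite nth_last /= last_rcons.
- by rewrite nth_last /= last_rcons.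
- move=> [|i] // _ hi /=.
  rewrite /= size_rcons /= in hi.
  rewrite -rcons_cons nth_rcons /=.
  have -> : i < (size p).+1 by lia.
  apply: hR.
  have : nth x (d1 :: p) i \in d1 :: p by apply: mem_nth; rewrite /=; lia.
  by rewrite inE => /orP [/eqP ->//|]; apply: pR.
Qed.

Lemma rsym (R : {set T}) : symmetric (fun a b => (a \in R) && (b \in R) && e a b).
Proof. by move=> a b; rewrite eS; case: (a \in R); case: (b \in R). Qed.

Lemma dirac n : forall (S Q : {set T}), #|S| <= n -> Q \subset S -> clique e Q ->
  (exists u, u \in S :\: Q) -> exists2 u, u \in S :\: Q & simplicial S u.
Proof.
elim: n => [|n IH] S Q.
  move=> hS _ _ [u hu]; move: hS; rewrite leqn0 => /eqP/cards0_eq S0.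
  by rewrite S0 !inE andbF in hu.
move=> hS QS cQ [u0 hu0].
case: (classic (clique e S)) => [cS|ncS].
  exists u0 => // a b aS bS _ _ ab; exact: cS.
have [x0 [y0 [x0S [y0S [nxy nexy]]]]] :
    exists x0 y0, x0 \in S /\ y0 \in S /\ x0 != y0 /\ ~~ e x0 y0.
  apply: NNPP => H; apply: ncS => a b aS bS ab; apply: NNPP => hab; apply: H.
  by exists a, b; repeat split => //; apply/negP.
have [x [xS [Qx [d [dS [dx nxd]]]]]] : exists x, x \in S /\
    (forall q, q \in Q -> (q == x) || e x q) /\
    exists d, d \in S /\ d != x /\ ~~ e x d.
  case: (classic (forall q, q \in Q -> (q == x0) || e x0 q)) => [hQ|hQ].
    by exists x0; split => //; split => //; exists y0; split => //; rewrite eq_sym.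
  have [q [qQ hq]] : exists q, q \in Q /\ ~~ ((q == x0) || e x0 q).
    apply: NNPP => H; apply: hQ => q qQ; apply: NNPP => hq; apply: H.
    by exists q; split => //; apply/negP.
  move: hq; rewrite negb_or => /andP [nqx nex].
  exists q; split; first exact: (subsetP QS).
  split.
    move=> q' q'Q; case: (eqVneq q' q) => //= nq; apply: cQ => //; by rewrite eq_sym.
  by exists x0; split => //; split; [rewrite eq_sym|rewrite eS].
set R := [set w in S | (w != x) && ~~ e x w].
set r := (fun a b => (a \in R) && (b \in R) && e a b).
set D := [set w | connect r d w].
set N' := [set y in S | e x y && [exists w in D, e y w]].
set S' := D :|: N'.
have hR : forall w, w \in R -> (w != x) && ~~ e x w by move=> w; rewrite inE => /andP [].
have RS : forall w, w \in R -> w \in S by move=> w; rewrite inE => /andP [].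
have dR : d \in R by rewrite inE dS dx nxd.
have DR : forall w, w \in D -> w \in R.
  move=> w; rewrite inE => /connectP [p hp ->].
  have := mem_last d p; rewrite inE => /orP [/eqP -> //|]; exact: (@path_in R d p hp).
have csym : connect_sym r by apply: sym_connect_sym; apply: rsym.
have Dcl : forall w a, w \in D -> a \in R -> e w a -> a \in D.
  move=> w a wD aR ewa; rewrite inE; apply: connect_trans (_ : connect r w a).
    by rewrite inE in wD.
  by apply: connect1; rewrite /r DR // aR ewa.
have cN : clique e N'.
  move=> y z; rewrite !inE => /andP [yS /andP [xy /existsP [d1 /andP [d1D yd1]]]].
  move=> /andP [zS /andP [xz /existsP [d2 /andP [d2D zd2]]]] nyz.
  case: (boolP (e y z)) => // neyz; exfalso.
  have : connect r d1 d2.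
    rewrite inE in d1D; rewrite inE in d2D.
    by apply: connect_trans d2D; rewrite csym.
  move=> /connectP [p hp d2E].
  exact: (nbr_clique hR xy xz nyz neyz yd1 zd2 (DR _ d1D) hp d2E).
have S'S : S' \proper S.
  apply/properP; split.
    apply/subsetP => w; rewrite inE => /orP [/DR/RS //|]; by rewrite inE => /andP [].
  exists x => //; rewrite inE negb_or; apply/andP; split.
    by apply/negP => /DR/hR; rewrite eqxx.
  by rewrite inE eirr andbF.
have nDN : forall w, w \in D -> w \notin N'.
  move=> w /DR/hR /andP [_ nxw]; by rewrite inE (negbTE nxw) andbF.
have [u hu su] : exists2 u, u \in S' :\: N' & simplicial S' u.
  apply: IH.
  - have := proper_card S'S; lia.
  - by apply/subsetP => w wN; rewrite inE wN orbT.
  - exact: cN.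
  - have dD : d \in D by rewrite inE connect0.
    by exists d; rewrite inE (nDN _ dD) /= inE dD.
have uD : u \in D.
  move: hu; rewrite inE => /andP [nuN]; rewrite inE => /orP [//|uN].
  by rewrite uN in nuN.
have /andP [ux nxu] := hR _ (DR _ uD).
exists u.
  rewrite inE (RS _ (DR _ uD)) andbT; apply/negP => uQ.
  by move: (Qx _ uQ); rewrite (negbTE ux) (negbTE nxu).
have inS' : forall a, a \in S -> e u a -> a \in S'.
  move=> a aS ua; rewrite inE; case: (boolP (e x a)) => xa.
    apply/orP; right; rewrite inE aS xa /=; apply/existsP; exists u.
    by rewrite uD eS.
  apply/orP; left; apply: (Dcl u) => //.
  rewrite inE aS xa andbT /=; apply/negP => /eqP ax.
  by move: ua; rewrite ax eS (negbTE nxu).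
move=> a b aS bS ua ub ab.
by apply: su => //; apply: inS'.
Qed.

Lemma exposed_of (v u : T) :
  e v u -> (exists w, e v w && e u w) ->
  (forall a b, e v a -> e v b -> e u a -> e u b -> a != b -> e a b) ->
  exposed_edge e v u.
Proof.
move=> vu [w0 /andP [vw0 uw0]] hs.
set K0 := [set w | (w == v) || (w == u) || (e v w && e u w)].
have vu' : v != u by apply/negP => /eqP vuE; move: vu; rewrite vuE eirr.
have cK0 : clique e K0.
  move=> a b; rewrite !inE.
  move=> /orP [/orP [/eqP -> | /eqP ->] | /andP [va ua]];
  move=> /orP [/orP [/eqP -> | /eqP ->] | /andP [vb ub]] //; rewrite ?eqxx //.
  - by move=> _; rewrite eS.
  - by move=> _; rewrite eS.
  - by move=> _; rewrite eS.
  - by move=> ab; apply: hs.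
have sub : forall K, clique e K -> v \in K -> u \in K -> K \subset K0.
  move=> K cK vK uK; apply/subsetP => w wK; rewrite inE.
  case: (eqVneq w v) => //= wv; case: (eqVneq w u) => //= wu.
  by rewrite cK // ?cK // eq_sym.
have sK0 : [set v; u] \subset K0.
  by apply/subsetP => w; rewrite !inE => /orP [] /eqP ->; rewrite eqxx ?orbT.
have vK0 : v \in K0 by rewrite inE eqxx.
have uK0 : u \in K0 by rewrite inE eqxx orbT.
have mK0 : maximal_clique e K0.
  split => // K' cK' sK'; apply/eqP; rewrite eqEsubset sK' andbT.
  by apply: sub => //; apply: (subsetP sK').
split.
- by split.
- exists K0; split; first by split.
  move=> K [[cK mK] sK]; apply: mK => //; apply: sub => //; apply: (subsetP sK); rewrite !inE eqxx ?orbT //.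
- move=> [_ [cF mF]].
  have := mF K0 cK0 sK0 => K0E.
  have : w0 \in K0 by rewrite inE vw0 uw0 !orbT.
  rewrite K0E !inE => /orP [/eqP wv|/eqP wu].
    by move: vw0; rewrite wv eirr.
  by move: uw0; rewrite wu eirr.
Qed.

End Proof.

Theorem lemma2p11 (T : finType) (e : rel T) (v : T) :
  simple_graph e -> chordal e ->
  (exists K : {set T}, [/\ maximal_clique e K, v \in K & 3 <= #|K|]) ->
  exists u w : T, [/\ u != w, exposed_edge e v u & exposed_edge e v w].
Proof.
move=> [eS eirr] chord [K [[cK mK] vK K3]].
set Nv := [set u | e v u].
set S := [set u in Nv | [exists w in Nv, e u w]].
have h1 : 0 < #|K :\ v| by move: K3; rewrite (cardsD1 v K) vK; lia.
have [a aK] := card_gt0P h1.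
have h2 : 0 < #|K :\ v :\ a| by move: K3; rewrite (cardsD1 v K) vK (cardsD1 a (K :\ v)) aK; lia.
have [b bK] := card_gt0P h2.
move: bK; rewrite !inE => /and3P [ba bv bK].
move: aK; rewrite !inE => /andP [av aK].
have va : e v a by apply: cK => //; rewrite eq_sym.
have vb : e v b by apply: cK => //; rewrite eq_sym.
have ab : e a b by apply: cK => //; rewrite eq_sym.
have aS : a \in S.
  by rewrite !inE va /=; apply/existsP; exists b; rewrite !inE vb ab.
have bS : b \in S.
  by rewrite !inE vb /=; apply/existsP; exists a; rewrite !inE va eS ab.
have expo : forall u, u \in S -> simplicial e S u -> exposed_edge e v u.
  move=> u; rewrite !inE => /andP [vu /existsP [w /andP [vw uw]]] su.
  apply: exposed_of => //.
    by exists w; rewrite uw andbT; move: vw; rewrite inE.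
  move=> x y vx vy ux uy xy; apply: su => //.
  - by rewrite !inE vx /=; apply/existsP; exists u; rewrite !inE vu eS.
  - by rewrite !inE vy /=; apply/existsP; exists u; rewrite !inE vu eS.
have [u1 hu1 su1] : exists2 u, u \in S :\: set0 & simplicial e S u.
  apply: (@dirac _ _ eS eirr chord #|S|) => //.
  - exact: sub0set.
  - by move=> x y; rewrite inE.
  - by exists a; rewrite inE aS in_set0.
have [u2 hu2 su2] : exists2 u, u \in S :\: [set u1] & simplicial e S u.
  apply: (@dirac _ _ eS eirr chord #|S|) => //.
  - by rewrite sub1set; move: hu1; rewrite inE => /andP [].
  - by move=> x y; rewrite !inE => /eqP -> /eqP ->; rewrite eqxx.
  - case: (eqVneq a u1) => [au|au].
      by exists b; rewrite inE bS in_set1 andbT -au.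
    by exists a; rewrite inE aS in_set1 andbT.
have u1S : u1 \in S by move: hu1; rewrite in_setD => /andP [].
have u2S : u2 \in S by move: hu2; rewrite in_setD => /andP [].
have u21 : u2 != u1 by move: hu2; rewrite in_setD in_set1 => /andP [].
exists u1, u2; split.
- by rewrite eq_sym.
- exact: expo.
- exact: expo.
Qed.
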